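(* Let $(X,d)$ be a compact metric space with $\mathrm{diam}(X)\le1$ and let $\xi\colon[0,1]\to[-\infty,\infty]$ be an order-preserving homeomorphism. For $A\in\bar J(X)$ define $h_X(A)\colon C(X)\to\mathbb R$ by $h_X(A)(\varphi)=\sup\{\xi(t)\wedge\varphi(x)\mid (x,t)\in A\}$. Then $h_X(A)\in J(X)$ for each $A$, and $h_X\colon\bar J(X)\to J(X)$ is a homeomorphism.
   Context: A max-min measure on a compact Hausdorff space $X$ is a functional $\mu\colon C(X)\to\mathbb R$ (not assumed continuous) such that $\mu(c_X)=c$ for constants $c$, $\mu(\varphi\vee\psi)=\mu(\varphi)\vee\mu(\psi)$, and $\mu(c\wedge\varphi)=c\wedge\mu(\varphi)$ for $c\in\mathbb R$; $J(X)$ is the set of max-min measures with the topology of pointwise convergence on $C(X)$. $\mathrm{Cone}(X)=(X\times[0,1])/(X\times\{0\})$ with metric $\check d((x,s),(y,t))=\min\{s,t\}d(x,y)+|s-t|$; $\exp$ of a metric space is the space of nonempty compact subsets with the Hausdorff metric. A subset $K\subset\mathrm{Cone}(X)$ is saturated if $(x,t)\in K$ implies $(x,t')\in K$ for all $t'\in[0,t]$. $\bar J(X)=\{A\in\exp(\mathrm{Cone}(X))\mid A \text{ saturated and }(x,1)\in A\text{ for some }x\in X\}$, with the Hausdorff metric topology. *)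

(* Defs.v *)
From Stdlib Require Import Reals Lra List ClassicalEpsilon.
Open Scope R_scope.

Definition is_metric {X : Type} (d : X -> X -> R) : Prop :=
  (forall x y, 0 <= d x y) /\
  (forall x y, d x y = 0 <-> x = y) /\
  (forall x y, d x y = d y x) /\
  (forall x y z, d x z <= d x y + d y z).

Definition seq_conv {T : Type} (d : T -> T -> R) (u : nat -> T) (l : T) : Prop :=
  forall eps, 0 < eps -> exists N, forall n, (N <= n)%nat -> d (u n) l < eps.

(** sequential compactness of a subset [K] (equivalent to compactness for
    (pseudo)metric spaces) *)
Definition seq_compact {T : Type} (d : T -> T -> R) (K : T -> Prop) : Prop :=
  forall u : nat -> T, (forall n, K (u n)) ->
  exists (g : nat -> nat) (l : T),
    (forall n, (g n < g (S n))%nat) /\ K l /\ seq_conv d (fun n => u (g n)) l.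

Definition compact_metric_space {X : Type} (d : X -> X -> R) : Prop :=
  is_metric d /\ seq_compact d (fun _ => True).

Definition diam_le_1 {X : Type} (d : X -> X -> R) : Prop :=
  forall x y, d x y <= 1.

Definition continuous_on {X : Type} (d : X -> X -> R) (f : X -> R) : Prop :=
  forall x eps, 0 < eps -> exists delta, 0 < delta /\
    forall y, d x y < delta -> Rabs (f y - f x) < eps.

Definition CX {X : Type} (d : X -> X -> R) : Type := { f : X -> R | continuous_on d f }.

Definition fn {X : Type} {d : X -> X -> R} (phi : CX d) : X -> R := proj1_sig phi.

(** * Max-min measures: J(X) (no continuity assumed).
    The operations are written out pointwise: [chi] is the constant function c,
    resp. phi \/ psi, resp. c /\ phi. *)
Definition is_maxmin {X : Type} {d : X -> X -> R} (mu : CX d -> R) : Prop :=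
  (forall (c : R) (chi : CX d), (forall x, fn chi x = c) -> mu chi = c) /\
  (forall phi psi chi : CX d, (forall x, fn chi x = Rmax (fn phi x) (fn psi x)) ->
      mu chi = Rmax (mu phi) (mu psi)) /\
  (forall (c : R) (phi chi : CX d), (forall x, fn chi x = Rmin c (fn phi x)) ->
      mu chi = Rmin c (mu phi)).

(** * The cone.  Points of Cone(X) are represented by pairs (x,t) with t in [0,1];
    the pseudometric below vanishes exactly on identified pairs. *)
Definition cone_dist {X : Type} (d : X -> X -> R) (p q : X * R) : R :=
  Rmin (snd p) (snd q) * d (fst p) (fst q) + Rabs (snd p - snd q).

(** A subset of Cone(X), represented as a predicate on X * [0,1] that is
    closed under the identification X * {0} = vertex. *)
Definition cone_subset {X : Type} (A : X * R -> Prop) : Prop :=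
  (forall x t, A (x, t) -> 0 <= t <= 1) /\
  (forall x y, A (x, 0) -> A (y, 0)).

Definition saturated {X : Type} (A : X * R -> Prop) : Prop :=
  forall x t t', A (x, t) -> 0 <= t' <= t -> A (x, t').

Definition in_barJ {X : Type} (d : X -> X -> R) (A : X * R -> Prop) : Prop :=
  cone_subset A /\
  (exists p, A p) /\ seq_compact (cone_dist d) A /\   (* A in exp(Cone X) *)
  saturated A /\
  (exists x, A (x, 1)).

(** Hausdorff distance: for nonempty compact sets, d_H(A,B) <= r iff every point
    of A is within r of some point of B and vice versa. *)
Definition hausdorff_le {X : Type} (d : X -> X -> R) (A B : X * R -> Prop) (r : R) : Prop :=
  (forall a, A a -> exists b, B b /\ cone_dist d a b <= r) /\
  (forall b, B b -> exists a, A a /\ cone_dist d a b <= r).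

Inductive Rbar : Type := Fin (r : R) | PInf | MInf.

Definition Rbar_le (a b : Rbar) : Prop :=
  match a, b with
  | MInf, _ => True
  | _, PInf => True
  | Fin x, Fin y => x <= y
  | _, _ => False
  end.

(** basic neighbourhoods of the order topology of [-oo, +oo], indexed by e > 0 *)
Definition Rbar_ball (y : Rbar) (e : R) (z : Rbar) : Prop :=
  match y with
  | Fin r => exists r', z = Fin r' /\ Rabs (r' - r) < e
  | PInf => z = PInf \/ exists r', z = Fin r' /\ / e < r'
  | MInf => z = MInf \/ exists r', z = Fin r' /\ r' < - / e
  end.

Definition order_homeo (xi : R -> Rbar) : Prop :=
  (forall s t, 0 <= s -> s <= t -> t <= 1 -> Rbar_le (xi s) (xi t)) /\
  (forall s t, 0 <= s <= 1 -> 0 <= t <= 1 -> xi s = xi t -> s = t) /\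
  (forall y, exists t, 0 <= t <= 1 /\ xi t = y) /\
  (forall t e, 0 <= t <= 1 -> 0 < e -> exists delta, 0 < delta /\
     forall s, 0 <= s <= 1 -> Rabs (s - t) < delta -> Rbar_ball (xi t) e (xi s)) /\
  (forall t delta, 0 <= t <= 1 -> 0 < delta -> exists e, 0 < e /\
     forall s, 0 <= s <= 1 -> Rbar_ball (xi t) e (xi s) -> Rabs (s - t) < delta).

Definition Rbar_min (a : Rbar) (r : R) : Rbar :=
  match a with
  | Fin x => Fin (Rmin x r)
  | PInf => Fin r
  | MInf => MInf
  end.

Definition is_sup_Rbar (S : Rbar -> Prop) (l : R) : Prop :=
  (forall z, S z -> Rbar_le z (Fin l)) /\
  (forall u, (forall z, S z -> Rbar_le z u) -> Rbar_le (Fin l) u).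

Definition hset {X : Type} {d : X -> X -> R} (xi : R -> Rbar)
  (A : X * R -> Prop) (phi : CX d) : Rbar -> Prop :=
  fun z => exists x t, A (x, t) /\ z = Rbar_min (xi t) (fn phi x).

Definition hX {X : Type} (d : X -> X -> R) (xi : R -> Rbar)
  (A : X * R -> Prop) (phi : CX d) : R :=
  epsilon (inhabits 0) (fun l => is_sup_Rbar (hset xi A phi) l).

(* Main.v *)
Require Import Defs.
From Stdlib Require Import Reals Lra Lia List Rtopology Classical ClassicalEpsilon.
Open Scope R_scope.

Definition strict_incr (g : nat -> nat) := forall n, (g n < g (S n))%nat.

Lemma strict_ge g : strict_incr g -> forall n, (n <= g n)%nat.
Proof. intros H n; induction n; [lia| specialize (H n); lia]. Qed.

Lemma strict_mono g : strict_incr g -> forall m n, (m < n)%nat -> (g m < g n)%nat.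
Proof.
  intros H m n Hmn; induction Hmn. apply H. specialize (H m0); lia.
Qed.

Lemma strict_comp g h : strict_incr g -> strict_incr h -> strict_incr (fun n => g (h n)).
Proof. intros Hg Hh n. apply strict_mono; auto. Qed.

Lemma small_inv eps : 0 < eps -> exists N : nat, forall n, (N <= n)%nat -> / (INR n + 1) < eps.
Proof.
  intros He. destruct (archimed_cor1 eps He) as [N [HN HN0]].
  exists N. intros n Hn.
  assert (HN' : 0 < INR N) by (apply lt_0_INR; lia).
  assert (INR N <= INR n) by (apply le_INR; lia).
  apply Rle_lt_trans with (/ INR N); auto.
  apply Rinv_le_contravar; lra.
Qed.

Lemma inv_pos n : 0 < / (INR n + 1).
Proof. apply Rinv_0_lt_compat. pose proof (pos_INR n). lra. Qed.

Lemma BW01 (u : nat -> R) : (forall n, 0 <= u n <= 1) ->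
  exists g l, strict_incr g /\ 0 <= l <= 1 /\
    forall eps, 0 < eps -> exists N, forall n, (N <= n)%nat -> Rabs (u (g n) - l) < eps.
Proof.
  intros Hu.
  destruct (Bolzano_Weierstrass u (fun c => 0 <= c <= 1) (compact_P3 0 1) Hu) as [l Hl].
  assert (Hc : forall (N : nat) (k : nat), exists p, (N <= p)%nat /\ Rabs (u p - l) < / (INR k + 1)).
  { intros N k. destruct (Hl (fun y => Rabs (y - l) < / (INR k + 1)) N) as [p [Hp1 Hp2]].
    - exists (mkposreal _ (inv_pos k)). intros y Hy. unfold disc in Hy. simpl in Hy.
      exact Hy.
    - exists p; auto. }
  set (ch := fun N k => proj1_sig (constructive_indefinite_description _ (Hc N k))).
  assert (Hch : forall N k, (N <= ch N k)%nat /\ Rabs (u (ch N k) - l) < / (INR k + 1)).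
  { intros N k. unfold ch. destruct (constructive_indefinite_description _ _); auto. }
  set (g := fix g n := match n with O => ch O O | S m => ch (S (g m)) (S m) end).
  assert (Hg : strict_incr g). { intros n. simpl. destruct (Hch (S (g n)) (S n)); lia. }
  assert (Hg2 : forall n, Rabs (u (g n) - l) < / (INR n + 1)).
  { intros [|n]; simpl; [apply Hch| apply Hch]. }
  exists g, l. split; [auto|split].
  -
    split; apply Rnot_lt_le; intro Hlt.
    + destruct (small_inv (-l) ltac:(lra)) as [N HN].
      specialize (HN N (le_n _)). specialize (Hg2 N). specialize (Hu (g N)).
      apply Rabs_def2 in Hg2. lra.
    + destruct (small_inv (l-1) ltac:(lra)) as [N HN].
      specialize (HN N (le_n _)). specialize (Hg2 N). specialize (Hu (g N)).
      apply Rabs_def2 in Hg2. lra.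
  - intros eps He. destruct (small_inv eps He) as [N HN]. exists N. intros n Hn.
    eapply Rlt_trans; [apply Hg2| apply HN; auto].
Qed.
Lemma d_nonneg {X} (d : X -> X -> R) : is_metric d -> forall x y, 0 <= d x y.
Proof. intros [H _]; auto. Qed.
Lemma d_refl {X} (d : X -> X -> R) : is_metric d -> forall x, d x x = 0.
Proof. intros [_ [H _]] x; apply H; auto. Qed.
Lemma d_sym {X} (d : X -> X -> R) : is_metric d -> forall x y, d x y = d y x.
Proof. intros [_ [_ [H _]]]; auto. Qed.
Lemma d_tri {X} (d : X -> X -> R) : is_metric d -> forall x y z, d x z <= d x y + d y z.
Proof. intros [_ [_ [_ H]]]; auto. Qed.
Lemma d_eq0 {X} (d : X -> X -> R) : is_metric d -> forall x y, d x y = 0 -> x = y.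
Proof. intros [_ [H _]] x y; apply H. Qed.

Definition Dp {X} (d : X -> X -> R) (p q : X * R) : R :=
  d (fst p) (fst q) + Rabs (snd p - snd q).
Definition Kp {X : Type} (p : X * R) : Prop := 0 <= snd p <= 1.

Lemma prod_compact {X} (d : X -> X -> R) : seq_compact d (fun _ => True) ->
  forall u : nat -> X * R, (forall n, Kp (u n)) ->
  exists g x t, strict_incr g /\ 0 <= t <= 1 /\
   forall eps, 0 < eps -> exists N, forall n, (N <= n)%nat ->
     d (fst (u (g n))) x < eps /\ Rabs (snd (u (g n)) - t) < eps.
Proof.
  intros HC u Hu.
  destruct (HC (fun n => fst (u n)) (fun _ => I)) as [g1 [x [Hg1 [_ Hx]]]].
  destruct (BW01 (fun n => snd (u (g1 n))) (fun n => Hu (g1 n))) as [g2 [t [Hg2 [Ht Hct]]]].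
  exists (fun n => g1 (g2 n)), x, t. split; [apply strict_comp; auto|split; auto].
  intros eps He. destruct (Hx eps He) as [N1 HN1]. destruct (Hct eps He) as [N2 HN2].
  exists (max N1 N2). intros n Hn. split.
  - apply HN1. pose proof (strict_ge g2 Hg2 n). lia.
  - apply HN2; lia.
Qed.

Lemma prod_seq_compact {X} (d : X -> X -> R) : is_metric d -> seq_compact d (fun _ => True) ->
  seq_compact (Dp d) Kp.
Proof.
  intros Hm HC u Hu. destruct (prod_compact d HC u Hu) as [g [x [t [Hg [Ht Hc]]]]].
  exists g, (x, t). split; auto. split; [exact Ht|].
  intros eps He. destruct (Hc (eps/2) ltac:(lra)) as [N HN]. exists N. intros n Hn.
  destruct (HN n Hn). unfold Dp; simpl. lra.
Qed.

Lemma total_bounded {T} (D : T -> T -> R) (K : T -> Prop) :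
  (forall x y, D x y = D y x) -> (forall x y z, D x z <= D x y + D y z) ->
  seq_compact D K ->
  forall rho, 0 < rho -> exists l : list T, (forall w, In w l -> K w) /\
     forall x, K x -> exists w, In w l /\ D w x < rho.
Proof.
  intros Hs Ht HC rho Hr. apply NNPP; intro Hn.
  assert (Hf : forall l : list T, (forall w, In w l -> K w) ->
     exists x, K x /\ forall w, In w l -> rho <= D w x).
  { intros l Hl. apply NNPP; intro H2. apply Hn. exists l. split; auto.
    intros x Kx. apply NNPP; intro H3. apply H2. exists x. split; auto.
    intros w Hw. apply Rnot_lt_le. intro H4. apply H3. exists w; auto. }
  destruct (Hf nil ltac:(simpl; tauto)) as [x0 [Kx0 _]].
  assert (inh : inhabited T) by (constructor; exact x0).
  set (F := fun l => epsilon inh (fun x => K x /\ forall w, In w l -> rho <= D w x)).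
  set (pts := fix pts n := match n with O => nil | S m => F (pts m) :: pts m end).
  assert (HP : forall n, (forall w, In w (pts n) -> K w) /\
            K (F (pts n)) /\ forall w, In w (pts n) -> rho <= D w (F (pts n))).
  { induction n as [|n [IH1 [IH2 IH3]]].
    - simpl. destruct (epsilon_spec inh _ (Hf nil ltac:(simpl; tauto))) as [A B].
      split; [simpl; tauto|]. fold (F nil) in A, B. split; auto.
    - assert (H1 : forall w, In w (pts (S n)) -> K w).
      { intros w [Hw|Hw]; [subst; auto| auto]. }
      destruct (epsilon_spec inh _ (Hf _ H1)) as [A B]. fold (F (pts (S n))) in A, B.
      split; auto. }
  assert (Hin : forall m n, (m < n)%nat -> In (F (pts m)) (pts n)).
  { intros m n Hmn. induction Hmn; simpl; auto. }
  destruct (HC (fun n => F (pts n)) (fun n => proj1 (proj2 (HP n)))) as [g [l [Hg [_ Hl]]]].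
  destruct (Hl (rho/2) ltac:(lra)) as [N HN].
  pose proof (HN N (le_n _)) as H1. pose proof (HN (S N) (le_S _ _ (le_n _))) as H2.
  simpl in H1, H2.
  pose proof (proj2 (proj2 (HP (g (S N)))) _ (Hin _ _ (Hg N))).
  pose proof (Ht (F (pts (g N))) l (F (pts (g (S N))))). rewrite (Hs l) in H0. lra.
Qed.

Lemma seqX {X} (d : X -> X -> R) : compact_metric_space d ->
  forall u : nat -> X, exists g x, strict_incr g /\
    forall eps, 0 < eps -> exists N, forall n, (N <= n)%nat -> d (u (g n)) x < eps.
Proof.
  intros [_ HC] u. destruct (HC u (fun _ => I)) as [g [x [Hg [_ Hx]]]]. exists g, x; auto.
Qed.

Lemma cont_bounded_above {X} (d : X -> X -> R) : compact_metric_space d ->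
  forall f, continuous_on d f -> exists M, forall x, f x <= M.
Proof.
  intros HX f Hf. apply NNPP; intro Hn.
  assert (H : forall n : nat, exists x, INR n < f x).
  { intros n. apply NNPP; intro H. apply Hn. exists (INR n). intros x.
    apply Rnot_lt_le. intro H2. apply H. exists x; auto. }
  destruct (choice _ H) as [u Hu].
  destruct (seqX d HX u) as [g [x [Hg Hx]]].
  destruct (Hf x 1 Rlt_0_1) as [dl [Hdl Hc]].
  destruct (Hx dl Hdl) as [N HN].
  destruct (INR_unbounded (f x + 1)) as [k Hk].
  set (n := max N k).
  pose proof (HN n ltac:(lia)) as H1.
  rewrite (d_sym d (proj1 HX)) in H1. specialize (Hc _ H1).
  specialize (Hu (g n)). pose proof (strict_ge g Hg n).
  assert (INR k <= INR (g n)) by (apply le_INR; lia).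
  apply Rabs_def2 in Hc. lra.
Qed.

Lemma cont_opp {X} (d : X -> X -> R) f : continuous_on d f -> continuous_on d (fun x => - f x).
Proof.
  intros Hf x e He. destruct (Hf x e He) as [dl [H1 H2]]. exists dl; split; auto.
  intros y Hy. specialize (H2 y Hy). rewrite <- Rabs_Ropp. replace (- (- f y - - f x)) with (f y - f x) by ring. auto.
Qed.

Lemma cont_bounded_below {X} (d : X -> X -> R) : compact_metric_space d ->
  forall f, continuous_on d f -> exists L, forall x, L <= f x.
Proof.
  intros HX f Hf. destruct (cont_bounded_above d HX _ (cont_opp d f Hf)) as [M HM].
  exists (-M). intros x; specialize (HM x); lra.
Qed.

Lemma unif_cont {X} (d : X -> X -> R) : compact_metric_space d ->
  forall f, continuous_on d f -> forall eps, 0 < eps -> exists delta, 0 < delta /\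
    forall x y, d x y < delta -> Rabs (f x - f y) < eps.
Proof.
  intros HX f Hf eps He. apply NNPP; intro Hn.
  assert (H : forall n : nat, exists p : X * X, d (fst p) (snd p) < / (INR n + 1) /\
                   eps <= Rabs (f (fst p) - f (snd p))).
  { intros n. apply NNPP; intro H. apply Hn. exists (/ (INR n + 1)). split; [apply inv_pos|].
    intros x y Hxy. apply Rnot_le_lt. intro H2. apply H. exists (x, y); auto. }
  destruct (choice _ H) as [u Hu].
  destruct (seqX d HX (fun n => fst (u n))) as [g [x [Hg Hx]]].
  destruct (Hf x (eps/2) ltac:(lra)) as [dl [Hdl Hc]].
  destruct (Hx (dl/2) ltac:(lra)) as [N1 HN1].
  destruct (small_inv (dl/2) ltac:(lra)) as [N2 HN2].
  set (n := max N1 N2).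
  pose proof (HN1 n ltac:(lia)) as H1.
  pose proof (strict_ge g Hg n).
  pose proof (HN2 (g n) ltac:(lia)) as H2.
  destruct (Hu (g n)) as [H3 H4].
  set (a := fst (u (g n))) in *. set (b := snd (u (g n))) in *.
  pose proof (proj1 HX) as Hm.
  assert (Ha : d x a < dl) by (rewrite (d_sym d Hm); lra).
  assert (Hb : d x b < dl).
  { pose proof (d_tri d Hm x a b) as T. rewrite (d_sym d Hm x a) in T. lra. }
  pose proof (Hc a Ha) as C1. pose proof (Hc b Hb) as C2.
  apply Rabs_def2 in C1. apply Rabs_def2 in C2.
  assert (Rabs (f a - f b) < eps) by (apply Rabs_def1; lra). lra.
Qed.

Lemma Rmax_close a b a' b' e : Rabs (a - a') < e -> Rabs (b - b') < e -> Rabs (Rmax a b - Rmax a' b') < e.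
Proof.
  intros H1 H2. apply Rabs_def2 in H1. apply Rabs_def2 in H2. apply Rabs_def1;
  unfold Rmax; destruct (Rle_dec a b), (Rle_dec a' b'); lra.
Qed.
Lemma Rmin_close a b a' b' e : Rabs (a - a') < e -> Rabs (b - b') < e -> Rabs (Rmin a b - Rmin a' b') < e.
Proof.
  intros H1 H2. apply Rabs_def2 in H1. apply Rabs_def2 in H2. apply Rabs_def1;
  unfold Rmin; destruct (Rle_dec a b), (Rle_dec a' b'); lra.
Qed.

Lemma cont_cst {X} (d : X -> X -> R) (c : R) : continuous_on d (fun _ => c).
Proof. intros x e He. exists 1. split; [lra|]. intros y _. rewrite Rminus_diag, Rabs_R0; auto. Qed.

Lemma cont_max {X} (d : X -> X -> R) f g : continuous_on d f -> continuous_on d g ->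
  continuous_on d (fun x => Rmax (f x) (g x)).
Proof.
  intros Hf Hg x e He. destruct (Hf x e He) as [d1 [H1 H1']]. destruct (Hg x e He) as [d2 [H2 H2']].
  exists (Rmin d1 d2). split; [apply Rmin_glb_lt; auto|]. intros y Hy.
  apply Rmax_close; [apply H1'|apply H2']; eapply Rlt_le_trans; eauto; [apply Rmin_l|apply Rmin_r].
Qed.

Lemma cont_min {X} (d : X -> X -> R) f g : continuous_on d f -> continuous_on d g ->
  continuous_on d (fun x => Rmin (f x) (g x)).
Proof.
  intros Hf Hg x e He. destruct (Hf x e He) as [d1 [H1 H1']]. destruct (Hg x e He) as [d2 [H2 H2']].
  exists (Rmin d1 d2). split; [apply Rmin_glb_lt; auto|]. intros y Hy.
  apply Rmin_close; [apply H1'|apply H2']; eapply Rlt_le_trans; eauto; [apply Rmin_l|apply Rmin_r].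
Qed.

Lemma cont_bumpfun {X} (d : X -> X -> R) : is_metric d -> forall w a K,
  continuous_on d (fun y => a - K * d w y).
Proof.
  intros Hm w a K x e He. exists (e / (Rabs K + 1)).
  assert (0 < Rabs K + 1) by (pose proof (Rabs_pos K); lra).
  split; [apply Rdiv_lt_0_compat; auto|]. intros y Hy.
  replace (a - K * d w y - (a - K * d w x)) with (K * (d w x - d w y)) by ring.
  rewrite Rabs_mult.
  assert (Rabs (d w x - d w y) <= d x y).
  { pose proof (d_tri d Hm w x y). pose proof (d_tri d Hm w y x). rewrite (d_sym d Hm y x) in H1.
    apply Rabs_le; lra. }
  assert (d x y * (Rabs K + 1) < e).
  { apply Rmult_lt_reg_r with (/ (Rabs K + 1)). apply Rinv_0_lt_compat; auto.
    rewrite Rmult_assoc, Rinv_r by lra. rewrite Rmult_1_r. exact Hy. }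
  pose proof (Rabs_pos K). pose proof (d_nonneg d Hm x y).
  pose proof (Rabs_pos (d w x - d w y)).
  apply Rle_lt_trans with (Rabs K * d x y). apply Rmult_le_compat_l; auto.
  nra.
Qed.

Definition ccst {X} (d : X -> X -> R) (c : R) : CX d := exist _ (fun _ => c) (cont_cst d c).
Definition cmax {X} {d : X -> X -> R} (f g : CX d) : CX d :=
  exist _ (fun x => Rmax (fn f x) (fn g x)) (cont_max d _ _ (proj2_sig f) (proj2_sig g)).
Definition cminc {X} {d : X -> X -> R} (c : R) (f : CX d) : CX d :=
  exist _ (fun x => Rmin c (fn f x)) (cont_min d _ _ (cont_cst d c) (proj2_sig f)).
Definition cbump {X} (d : X -> X -> R) (Hm : is_metric d) (w : X) (a1 a2 K : R) : CX d :=
  exist _ (fun y => Rmax a1 (a2 - K * d w y)) (cont_max d _ _ (cont_cst d a1) (cont_bumpfun d Hm w a2 K)).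

Lemma Rbar_le_refl a : Rbar_le a a.
Proof. destruct a; simpl; auto; lra. Qed.
Lemma Rbar_le_trans a b c : Rbar_le a b -> Rbar_le b c -> Rbar_le a c.
Proof. destruct a, b, c; simpl; auto; try tauto; lra. Qed.
Lemma Rbar_le_total a b : Rbar_le a b \/ Rbar_le b a.
Proof. destruct a, b; simpl; auto. destruct (Rle_dec r r0); [left|right]; lra. Qed.
Lemma Rbar_le_antisym a b : Rbar_le a b -> Rbar_le b a -> a = b.
Proof. destruct a, b; simpl; try tauto. intros; f_equal; lra. Qed.
Lemma Rbar_le_Fin z v v' : Rbar_le z (Fin v) -> v <= v' -> Rbar_le z (Fin v').
Proof. destruct z; simpl; auto; lra. Qed.
Lemma Fin_le_Rbar z v v' : Rbar_le (Fin v') z -> v <= v' -> Rbar_le (Fin v) z.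
Proof. destruct z; simpl; auto; lra. Qed.
Lemma Rbar_not_le z v : ~ Rbar_le z (Fin v) -> Rbar_le (Fin v) z.
Proof. destruct z; simpl; auto; lra. Qed.
Lemma Rbar_lt_le_trans a b c : ~ Rbar_le b a -> Rbar_le b c -> ~ Rbar_le c a.
Proof. intros H1 H2 H3. apply H1. eapply Rbar_le_trans; eauto. Qed.

Lemma Rmin_le_r a r : Rbar_le (Rbar_min a r) (Fin r).
Proof. destruct a; simpl; auto; [apply Rmin_r|lra]. Qed.
Lemma Rmin_le_a a r : Rbar_le (Rbar_min a r) a.
Proof. destruct a; simpl; auto; apply Rmin_l. Qed.
Lemma Rmin_ge a r v : Rbar_le (Fin v) a -> v <= r -> Rbar_le (Fin v) (Rbar_min a r).
Proof. destruct a; simpl; auto; intros; apply Rmin_glb; auto. Qed.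
Lemma Rmin_ge_inv a r v : Rbar_le (Fin v) (Rbar_min a r) -> Rbar_le (Fin v) a /\ v <= r.
Proof.
  destruct a; simpl; try tauto; intros H; try (split; auto; fail).
  split; eapply Rle_trans; eauto; [apply Rmin_l|apply Rmin_r].
Qed.
Lemma Rmin_mono a r r' : r <= r' -> Rbar_le (Rbar_min a r) (Rbar_min a r').
Proof.
  destruct a; simpl; auto. intros. unfold Rmin; repeat destruct Rle_dec; lra.
Qed.
Lemma Rmin_lub a r v : Rbar_le a (Fin v) \/ r <= v -> Rbar_le (Rbar_min a r) (Fin v).
Proof.
  intros [H|H]. eapply Rbar_le_trans; [apply Rmin_le_a|auto].
  eapply Rbar_le_trans; [apply Rmin_le_r|simpl; auto].
Qed.
Lemma Rmin_Fin a r v : Rbar_min a r = Fin v -> Rbar_le (Fin v) a /\ v <= r.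
Proof. intros H. apply Rmin_ge_inv. rewrite H. simpl; lra. Qed.

Lemma Rmin_max_le a p q w : Rbar_le (Rbar_min a p) (Fin w) -> Rbar_le (Rbar_min a q) (Fin w) ->
  Rbar_le (Rbar_min a (Rmax p q)) (Fin w).
Proof.
  destruct a; simpl; auto; unfold Rmin, Rmax; repeat destruct Rle_dec; lra.
Qed.
Lemma Rmin_min_le a p c l : Rbar_le (Rbar_min a p) (Fin l) ->
  Rbar_le (Rbar_min a (Rmin c p)) (Fin (Rmin c l)).
Proof.
  destruct a; simpl; auto; unfold Rmin; repeat destruct Rle_dec; lra.
Qed.
Lemma Rmin_min_eq a p c r : Rbar_min a p = Fin r -> Rbar_min a (Rmin c p) = Fin (Rmin c r).
Proof.
  destruct a; simpl; intros H; inversion H; subst; f_equal; auto.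
  unfold Rmin; repeat destruct Rle_dec; lra.
Qed.

Lemma sup_ub S l z : is_sup_Rbar S l -> S z -> Rbar_le z (Fin l).
Proof. intros [H _]; auto. Qed.
Lemma sup_le S l v : is_sup_Rbar S l -> (forall z, S z -> Rbar_le z (Fin v)) -> l <= v.
Proof. intros [_ H] H2. exact (H _ H2). Qed.
Lemma le_sup S l z v : is_sup_Rbar S l -> S z -> Rbar_le (Fin v) z -> v <= l.
Proof. intros H Hz Hv. pose proof (sup_ub S l z H Hz). exact (Rbar_le_trans _ _ _ Hv H0). Qed.
Lemma sup_unique S l l' : is_sup_Rbar S l -> is_sup_Rbar S l' -> l = l'.
Proof.
  intros H1 H2. apply Rle_antisym; [apply (sup_le S l l' H1)|apply (sup_le S l' l H2)];
  intros z Hz; eapply sup_ub; eauto.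
Qed.
Lemma sup_approx S l v : is_sup_Rbar S l -> v < l -> exists z, S z /\ Rbar_le (Fin v) z /\ ~ Rbar_le z (Fin v).
Proof.
  intros H Hv. apply NNPP; intro Hn.
  assert (l <= v).
  { apply (sup_le S l v H). intros z Hz. apply NNPP; intro H2. apply Hn. exists z. split; auto.
    split; auto. apply Rbar_not_le; auto. }
  lra.
Qed.

Lemma xi_mono xi : order_homeo xi -> forall s t, 0 <= s -> s <= t -> t <= 1 -> Rbar_le (xi s) (xi t).
Proof. intros [H _]; auto. Qed.
Lemma xi_inj xi : order_homeo xi -> forall s t, 0 <= s <= 1 -> 0 <= t <= 1 -> xi s = xi t -> s = t.
Proof. intros [_ [H _]]; auto. Qed.
Lemma xi_surj xi : order_homeo xi -> forall y, exists t, 0 <= t <= 1 /\ xi t = y.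
Proof. intros [_ [_ [H _]]]; auto. Qed.
Lemma xi0 xi : order_homeo xi -> xi 0 = MInf.
Proof.
  intros H. destruct (xi_surj xi H MInf) as [t [Ht Ht']].
  pose proof (xi_mono xi H 0 t ltac:(lra) ltac:(lra) ltac:(lra)). rewrite Ht' in H0.
  destruct (xi 0); simpl in H0; tauto.
Qed.
Lemma xi1 xi : order_homeo xi -> xi 1 = PInf.
Proof.
  intros H. destruct (xi_surj xi H PInf) as [t [Ht Ht']].
  pose proof (xi_mono xi H t 1 ltac:(lra) ltac:(lra) ltac:(lra)). rewrite Ht' in H0.
  destruct (xi 1); simpl in H0; tauto.
Qed.
Lemma xi_lt xi : order_homeo xi -> forall s t, 0 <= s <= 1 -> 0 <= t <= 1 ->
  ~ Rbar_le (xi t) (xi s) -> s < t.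
Proof.
  intros H s t Hs Ht Hn. apply Rnot_le_lt. intro H2. apply Hn. apply xi_mono; auto; lra.
Qed.
Lemma xi_strict xi : order_homeo xi -> forall s t, 0 <= s -> s < t -> t <= 1 -> ~ Rbar_le (xi t) (xi s).
Proof.
  intros H s t H1 H2 H3 H4. pose proof (xi_mono xi H s t H1 ltac:(lra) H3).
  pose proof (Rbar_le_antisym _ _ H0 H4). apply xi_inj in H5; auto; lra.
Qed.
Lemma xi_inv xi : order_homeo xi -> forall v, exists t, 0 < t < 1 /\ xi t = Fin v.
Proof.
  intros H v. destruct (xi_surj xi H (Fin v)) as [t [Ht Ht']]. exists t. split; auto.
  split.
  - destruct (Req_dec t 0); [subst; rewrite xi0 in Ht'; auto; discriminate|lra].
  - destruct (Req_dec t 1); [subst; rewrite xi1 in Ht'; auto; discriminate|lra].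
Qed.
Lemma xi_fin xi : order_homeo xi -> forall t, 0 < t < 1 -> exists v, xi t = Fin v.
Proof.
  intros H t Ht. destruct (xi t) eqn:E; eauto.
  - rewrite <- (xi1 xi H) in E. apply xi_inj in E; auto; lra.
  - rewrite <- (xi0 xi H) in E. apply xi_inj in E; auto; lra.
Qed.
Lemma xi_gt_pos xi : order_homeo xi -> forall s sg v, 0 <= s <= 1 -> 0 <= sg <= 1 ->
  xi sg = Fin v -> ~ Rbar_le (xi s) (Fin v) -> sg < s.
Proof. intros H s sg v Hs Hsg E Hn. apply (xi_lt xi H); auto. rewrite E; auto. Qed.
Lemma xi_ge_val xi : order_homeo xi -> forall s sg v, 0 <= sg -> sg <= s -> s <= 1 ->
  xi sg = Fin v -> Rbar_le (Fin v) (xi s).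
Proof. intros H s sg v H1 H2 H3 E. rewrite <- E. apply xi_mono; auto. Qed.
Lemma xi_le_val xi : order_homeo xi -> forall s sg v, 0 <= s -> s <= sg -> sg <= 1 ->
  xi sg = Fin v -> Rbar_le (xi s) (Fin v).
Proof. intros H s sg v H1 H2 H3 E. rewrite <- E. apply xi_mono; auto. Qed.
Lemma xi_lt_val xi : order_homeo xi -> forall s sg v, 0 <= s -> s < sg -> sg <= 1 ->
  xi sg = Fin v -> ~ Rbar_le (Fin v) (xi s).
Proof. intros H s sg v H1 H2 H3 E. rewrite <- E. apply xi_strict; auto. Qed.

Lemma hset_notP {X} {d : X -> X -> R} xi A (phi : CX d) : ~ hset xi A phi PInf.
Proof. intros [x [t [_ E]]]. destruct (xi t); discriminate. Qed.

Lemma sup_exists {X} (d : X -> X -> R) xi : compact_metric_space d -> order_homeo xi ->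
  forall A, (exists x, A (x, 1)) -> forall phi : CX d, exists l, is_sup_Rbar (hset xi A phi) l.
Proof.
  intros HX Hxi A [x1 Hx1] phi.
  destruct (cont_bounded_above d HX (fn phi) (proj2_sig phi)) as [M HM].
  set (E := fun r => hset xi A phi (Fin r)).
  assert (HE1 : bound E).
  { exists M. intros r [x [t [_ Hr]]]. symmetry in Hr. apply Rmin_Fin in Hr. specialize (HM x). lra. }
  assert (HE2 : exists r, E r).
  { exists (fn phi x1). exists x1, 1. split; auto. rewrite (xi1 xi Hxi). reflexivity. }
  destruct (completeness E HE1 HE2) as [l [Hl1 Hl2]].
  exists l. split.
  - intros z Hz. destruct z as [r| |]; simpl.
    + apply Hl1. exact Hz.
    + apply (hset_notP xi A phi Hz).
    + auto.
  - intros u Hu. destruct u as [v| |]; simpl.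
    + apply Hl2. intros r Hr. apply (Hu _ Hr).
    + auto.
    + apply (Hu (Fin (fn phi x1))). exists x1, 1. split; auto. rewrite (xi1 xi Hxi). reflexivity.
Qed.

Lemma hX_spec {X} (d : X -> X -> R) xi : compact_metric_space d -> order_homeo xi ->
  forall A, (exists x, A (x, 1)) -> forall phi : CX d, is_sup_Rbar (hset xi A phi) (hX d xi A phi).
Proof.
  intros HX Hxi A H1 phi. destruct (sup_exists d xi HX Hxi A H1 phi) as [l Hl].
  unfold hX. apply (epsilon_spec (inhabits 0) (fun l => is_sup_Rbar (hset xi A phi) l)).
  exists l; exact Hl.
Qed.

Lemma barJ_one {X} (d : X -> X -> R) A : in_barJ d A -> exists x, A (x, 1).
Proof. intros (_ & _ & _ & _ & H); exact H. Qed.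

Lemma hX_maxmin {X} (d : X -> X -> R) xi : compact_metric_space d -> order_homeo xi ->
  forall A, (exists x, A (x, 1)) -> is_maxmin (hX d xi A).
Proof.
  intros HX Hxi A H1. pose proof (hX_spec d xi HX Hxi A H1) as HS. destruct H1 as [x1 Hx1].
  split; [|split].
  - intros c chi Hchi. specialize (HS chi). apply Rle_antisym.
    + apply (sup_le _ _ _ HS). intros z [x [t [_ ->]]]. rewrite Hchi. apply Rmin_le_r.
    + apply (le_sup _ _ (Fin c) c HS). exists x1, 1. split; auto. rewrite (xi1 xi Hxi), Hchi. reflexivity.
      simpl; lra.
  - intros phi psi chi Hchi. pose proof (HS phi) as Sf. pose proof (HS psi) as Sg. pose proof (HS chi) as Sc.
    apply Rle_antisym.
    + apply (sup_le _ _ _ Sc). intros z [x [t [Ht ->]]]. rewrite Hchi. apply Rmin_max_le.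
      * eapply Rbar_le_Fin. apply (sup_ub _ _ _ Sf). exists x, t; split; eauto. apply Rmax_l.
      * eapply Rbar_le_Fin. apply (sup_ub _ _ _ Sg). exists x, t; split; eauto. apply Rmax_r.
    + apply Rmax_lub.
      * apply (sup_le _ _ _ Sf). intros z [x [t [Ht ->]]].
        eapply Rbar_le_trans; [apply (Rmin_mono _ _ (fn chi x))|].
        rewrite Hchi. apply Rmax_l. apply (sup_ub _ _ _ Sc). exists x, t; split; auto.
      * apply (sup_le _ _ _ Sg). intros z [x [t [Ht ->]]].
        eapply Rbar_le_trans; [apply (Rmin_mono _ _ (fn chi x))|].
        rewrite Hchi. apply Rmax_r. apply (sup_ub _ _ _ Sc). exists x, t; split; auto.
  - intros c phi chi Hchi. pose proof (HS phi) as Sf. pose proof (HS chi) as Sc.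
    apply Rle_antisym.
    + apply (sup_le _ _ _ Sc). intros z [x [t [Ht ->]]]. rewrite Hchi. apply Rmin_min_le.
      apply (sup_ub _ _ _ Sf). exists x, t; split; auto.
    + apply Rnot_lt_le. intro Hlt.
      assert (Hl : hX d xi A chi < hX d xi A phi).
      { eapply Rlt_le_trans; [exact Hlt| apply Rmin_r]. }
      destruct (sup_approx _ _ _ Sf Hl) as [z [[x [t [Ht Ez]]] [Hz1 Hz2]]].
      destruct z as [r| |]; simpl in Hz1, Hz2; try tauto; [|destruct (xi t); discriminate].
      assert (Ec : Rbar_min (xi t) (fn chi x) = Fin (Rmin c r)).
      { rewrite Hchi. apply Rmin_min_eq. auto. }
      pose proof (sup_ub _ _ _ Sc (ex_intro _ x (ex_intro _ t (conj Ht (eq_sym Ec))))).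
      simpl in H. pose proof (Rmin_l c (hX d xi A phi)).
      unfold Rmin in *; repeat destruct Rle_dec; lra.
Qed.

Lemma small_zero a : (forall eps, 0 < eps -> Rabs a < eps) -> a = 0.
Proof.
  intros H. destruct (Req_dec a 0); auto. pose proof (Rabs_pos_lt a H0).
  specialize (H _ H1). lra.
Qed.

Lemma Rmin01 s t : 0 <= s <= 1 -> 0 <= t <= 1 -> 0 <= Rmin s t <= 1.
Proof. intros; unfold Rmin; destruct Rle_dec; lra. Qed.

Lemma cone_dist_t {X} (d : X -> X -> R) : is_metric d -> forall p q, 0 <= snd p -> 0 <= snd q ->
  Rabs (snd p - snd q) <= cone_dist d p q.
Proof.
  intros Hm p q H1 H2. unfold cone_dist.
  assert (0 <= Rmin (snd p) (snd q)) by (unfold Rmin; destruct Rle_dec; lra).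
  pose proof (d_nonneg d Hm (fst p) (fst q)). nra.
Qed.

Lemma cone_dist_le {X} (d : X -> X -> R) : is_metric d -> forall p q,
  0 <= snd p <= 1 -> 0 <= snd q <= 1 ->
  cone_dist d p q <= d (fst p) (fst q) + Rabs (snd p - snd q).
Proof.
  intros Hm p q H1 H2. unfold cone_dist. pose proof (Rmin01 _ _ H1 H2).
  pose proof (d_nonneg d Hm (fst p) (fst q)). nra.
Qed.

Lemma barJ_sub {X} (d : X -> X -> R) A : in_barJ d A -> forall x t, A (x, t) -> 0 <= t <= 1.
Proof. intros ([H _] & _); auto. Qed.
Lemma barJ_sat {X} (d : X -> X -> R) A : in_barJ d A -> saturated A.
Proof. intros (_ & _ & _ & H & _); auto. Qed.
Lemma barJ_cpt {X} (d : X -> X -> R) A : in_barJ d A -> seq_compact (cone_dist d) A.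
Proof. intros (_ & _ & H & _); auto. Qed.
Lemma barJ_zero {X} (d : X -> X -> R) A : in_barJ d A -> forall x, A (x, 0).
Proof.
  intros HA x. destruct (barJ_one d A HA) as [y Hy].
  destruct HA as ([_ H0] & _ & _ & Hs & _). apply (H0 y). apply (Hs y 1); auto; lra.
Qed.

Lemma inj_one {X} (d : X -> X -> R) xi : compact_metric_space d -> order_homeo xi ->
  forall A B, in_barJ d A -> in_barJ d B ->
  (forall phi : CX d, hX d xi A phi = hX d xi B phi) -> forall p, A p -> B p.
Proof.
  intros HX Hxi A B HA HB Heq [x0 t0] Hp. pose proof (proj1 HX) as Hm.
  pose proof (barJ_sub d A HA x0 t0 Hp) as Ht0.
  destruct (Req_dec t0 0) as [E0|Ht0p].
  { subst. apply (barJ_zero d B HB). }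
  assert (Ht0' : 0 < t0) by lra. clear Ht0p.
  pose proof (hX_spec d xi HX Hxi A (barJ_one d A HA)) as SA.
  pose proof (hX_spec d xi HX Hxi B (barJ_one d B HB)) as SB.
  assert (Step1 : forall eta, 0 < eta -> exists y t, B (y, t) /\ t0 - eta < t /\ t <= t0 /\ d x0 y < eta).
  { intros eta He. apply NNPP; intro Hn.
    assert (Hall : forall y t, B (y, t) -> t <= t0 - eta \/ eta <= d x0 y).
    { intros y t Hyt. destruct (Rle_dec t (t0 - eta)) as [|Hlt]; [left; auto|right].
      apply Rnot_lt_le. intro Hd. apply Hn. destruct (Rle_dec t t0).
      - exists y, t. repeat split; auto; lra.
      - exists y, t0. repeat split; auto; try lra. apply (barJ_sat d B HB y t); auto; lra. }
    set (e' := Rmin eta t0).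
    assert (He' : 0 < e' <= eta /\ e' <= t0) by (unfold e', Rmin; destruct Rle_dec; lra).
    set (t2 := t0 - 2 * e' / 3). set (t1 := t0 - e' / 3).
    destruct (xi_fin xi Hxi t2 ltac:(unfold t2; lra)) as [v2 Hv2].
    destruct (xi_fin xi Hxi t1 ltac:(unfold t1; lra)) as [v1 Hv1].
    assert (Hv : v2 < v1).
    { pose proof (xi_strict xi Hxi t2 t1 ltac:(unfold t2; lra) ltac:(unfold t1, t2; lra) ltac:(unfold t1; lra)).
      rewrite Hv1, Hv2 in H. simpl in H. lra. }
    set (K := (v1 - v2) / eta).
    assert (HK : K * eta = v1 - v2) by (unfold K; field; lra).
    assert (HK0 : 0 <= K) by (unfold K; unfold Rdiv; apply Rmult_le_pos; [lra|left; apply Rinv_0_lt_compat; lra]).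
    set (phi := cbump d Hm x0 v2 v1 K).
    assert (HBle : hX d xi B phi <= v2).
    { apply (sup_le _ _ _ (SB phi)). intros z [y [t [Hyt ->]]]. apply Rmin_lub.
      destruct (Hall y t Hyt) as [H1|H1].
      - left. apply (xi_le_val xi Hxi t t2 v2); auto.
        apply (barJ_sub d B HB y t Hyt). unfold t2; lra. unfold t2; lra.
      - right. simpl. apply Rmax_lub; [lra|]. nra. }
    assert (HAge : v1 <= hX d xi A phi).
    { apply (le_sup _ _ (Rbar_min (xi t0) (fn phi x0)) v1 (SA phi)).
      exists x0, t0; split; auto. apply Rmin_ge.
      apply (xi_ge_val xi Hxi t0 t1 v1); auto; unfold t1; lra.
      simpl. rewrite (d_refl d Hm). rewrite Rmult_0_r, Rminus_0_r. apply Rmax_r. }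
    rewrite (Heq phi) in HAge. lra. }
  assert (Hc : forall n : nat, exists q, B q /\ t0 - / (INR n + 1) < snd q /\ snd q <= t0 /\
                 d x0 (fst q) < / (INR n + 1)).
  { intros n. destruct (Step1 _ (inv_pos n)) as [y [t [H1 [H2 [H3 H4]]]]]. exists (y, t); auto. }
  destruct (choice _ Hc) as [u Hu].
  destruct (barJ_cpt d B HB u (fun n => proj1 (Hu n))) as [g [[y s] [Hg [Hl Hconv]]]].
  assert (Hs01 : 0 <= s <= 1) by (apply (barJ_sub d B HB y s Hl)).
  assert (Hu01 : forall n, 0 <= snd (u n) <= 1).
  { intros n. destruct (u n) as [a b] eqn:E. simpl. apply (barJ_sub d B HB a b). rewrite <- E. apply Hu. }
  assert (Es : s = t0).
  { assert (s - t0 = 0); [|lra]. apply small_zero. intros eps He.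
    destruct (Hconv (eps/2) ltac:(lra)) as [N1 HN1].
    destruct (small_inv (eps/2) ltac:(lra)) as [N2 HN2].
    set (n := max N1 N2). pose proof (strict_ge g Hg n).
    specialize (HN1 n ltac:(lia)). specialize (HN2 (g n) ltac:(lia)).
    pose proof (cone_dist_t d Hm (u (g n)) (y, s) ltac:(apply Hu01) ltac:(simpl; lra)) as C.
    simpl in C. destruct (Hu (g n)) as [_ [H2 [H3 _]]].
    assert (C2 : Rabs (snd (u (g n)) - s) < eps / 2) by lra.
    apply Rabs_def2 in C2 as [C2a C2b]. apply Rabs_def1; lra. }
  subst s.
  assert (Ey : y = x0).
  { symmetry. apply (d_eq0 d Hm). assert (Hz : d x0 y = 0); [|exact Hz].
    apply small_zero. intros eps He. rewrite Rabs_pos_eq by (apply (d_nonneg d Hm)).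
    destruct (Hconv (eps * t0 / 4) ltac:(nra)) as [N1 HN1].
    destruct (small_inv (Rmin (eps/2) (t0/2)) ltac:(apply Rmin_glb_lt; lra)) as [N2 HN2].
    set (n := max N1 N2). pose proof (strict_ge g Hg n).
    specialize (HN1 n ltac:(lia)). specialize (HN2 (g n) ltac:(lia)).
    pose proof (Rmin_l (eps/2) (t0/2)). pose proof (Rmin_r (eps/2) (t0/2)).
    destruct (Hu (g n)) as [_ [H2 [H3 H4]]].
    destruct (u (g n)) as [a b]. simpl in *. unfold cone_dist in HN1. simpl in HN1.
    rewrite Rmin_left in HN1 by lra.
    pose proof (Rabs_pos (b - t0)). pose proof (d_nonneg d Hm a y).
    assert (d a y < eps / 2) by nra.
    pose proof (d_tri d Hm x0 a y). lra. }
  subst y. exact Hl.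
Qed.

Lemma Rabs_le_inv2 x a : Rabs x <= a -> - a <= x <= a.
Proof. intros H. pose proof (Rle_abs x). pose proof (Rle_abs (-x)). rewrite Rabs_Ropp in H1. lra. Qed.

Lemma xi_inv_lt xi : order_homeo xi -> forall s t v w, 0 <= s <= 1 -> 0 <= t <= 1 ->
  xi s = Fin v -> xi t = Fin w -> v < w -> s < t.
Proof.
  intros H s t v w Hs Ht E1 E2 Hvw. apply (xi_lt xi H); auto. rewrite E1, E2. simpl. lra.
Qed.

Lemma xi_ge_inv xi : order_homeo xi -> forall s sg v, 0 <= s <= 1 -> 0 <= sg <= 1 ->
  xi sg = Fin v -> Rbar_le (Fin v) (xi s) -> sg <= s.
Proof.
  intros H s sg v Hs Hsg E Hle. apply Rnot_lt_le. intro Hlt.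
  apply (xi_lt_val xi H s sg v); auto; lra.
Qed.

Lemma dist_from_cone a b m delta du : 0 < m -> 0 <= a -> m <= b -> b * a <= delta ->
  delta <= du * m / 2 -> 0 < du -> a < du.
Proof.
  intros. assert (a * m <= a * b) by (apply Rmult_le_compat_l; lra).
  assert (a * m <= du * m / 2) by lra.
  assert (a <= du / 2).
  { apply Rmult_le_reg_r with m; auto. lra. }
  lra.
Qed.

Lemma hcont {X} (d : X -> X -> R) xi : compact_metric_space d -> order_homeo xi ->
  forall A (phi : CX d) eps, in_barJ d A -> 0 < eps ->
     exists delta, 0 < delta /\
       forall B, in_barJ d B -> hausdorff_le d A B delta ->
         Rabs (hX d xi B phi - hX d xi A phi) < eps.
Proof.
  intros HX Hxi A phi eps HA He. pose proof (proj1 HX) as Hm.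
  pose proof (hX_spec d xi HX Hxi A (barJ_one d A HA) phi) as SA.
  set (m := hX d xi A phi) in *.
  destruct (xi_inv xi Hxi (m - eps/2)) as [sa [Hsa Ea]].
  destruct (xi_inv xi Hxi (m - eps/4)) as [sb [Hsb Eb]].
  destruct (xi_inv xi Hxi (m + eps/4)) as [sc [Hsc Ec]].
  destruct (xi_inv xi Hxi (m + eps/2)) as [sd [Hsd Ed]].
  assert (Hab : sa < sb) by (apply (xi_inv_lt xi Hxi sa sb (m - eps/2) (m - eps/4)); auto; lra).
  assert (Hcd : sc < sd) by (apply (xi_inv_lt xi Hxi sc sd (m + eps/4) (m + eps/2)); auto; lra).
  destruct (unif_cont d HX (fn phi) (proj2_sig phi) (eps/4) ltac:(lra)) as [du [Hdu Hu]].
  set (delta := Rmin (Rmin (sb - sa) (sd - sc)) (Rmin (du * sa / 2) (du * sc / 2))).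
  assert (Hd1 : delta <= sb - sa) by (unfold delta; eapply Rle_trans; apply Rmin_l).
  assert (Hd2 : delta <= sd - sc) by (unfold delta; eapply Rle_trans; [apply Rmin_l|apply Rmin_r]).
  assert (Hd3 : delta <= du * sa / 2) by (unfold delta; eapply Rle_trans; [apply Rmin_r|apply Rmin_l]).
  assert (Hd4 : delta <= du * sc / 2) by (unfold delta; eapply Rle_trans; [apply Rmin_r|apply Rmin_r]).
  assert (Hdp : 0 < delta).
  { unfold delta. apply Rmin_glb_lt; apply Rmin_glb_lt; try lra; nra. }
  exists delta. split; auto. intros B HB [H1 H2].
  pose proof (hX_spec d xi HX Hxi B (barJ_one d B HB) phi) as SB.
  assert (Low : m - eps/2 <= hX d xi B phi).
  { destruct (sup_approx _ _ (m - eps/4) SA ltac:(lra)) as [z [[x [s [Hxs ->]]] [Hz1 _]]].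
    apply Rmin_ge_inv in Hz1 as [Hz1 Hz2].
    pose proof (barJ_sub d A HA x s Hxs) as Hs01.
    pose proof (xi_ge_inv xi Hxi s sb _ Hs01 ltac:(lra) Eb Hz1) as Hsb'.
    destruct (H1 (x, s) Hxs) as [[y t] [Hyt Hc]].
    pose proof (barJ_sub d B HB y t Hyt) as Ht01.
    pose proof (cone_dist_t d Hm (x, s) (y, t) ltac:(simpl; lra) ltac:(simpl; lra)) as Ct. simpl in Ct.
    assert (Hts : sa <= t) by (apply Rabs_le_inv2 in Ct; lra).
    assert (Hmin : sa <= Rmin s t) by (apply Rmin_glb; lra).
    assert (Hdxy : d x y < du).
    { unfold cone_dist in Hc; simpl in Hc. pose proof (Rabs_pos (s - t)).
      apply (dist_from_cone (d x y) (Rmin s t) sa delta du); auto; try lra. apply (d_nonneg d Hm). }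
    specialize (Hu x y Hdxy). apply Rabs_def2 in Hu.
    apply (le_sup _ _ (Rbar_min (xi t) (fn phi y)) _ SB). exists y, t; split; auto.
    apply Rmin_ge; [|lra]. apply (xi_ge_val xi Hxi t sa); auto; lra. }
  assert (Up : hX d xi B phi <= m + eps/2).
  { apply (sup_le _ _ _ SB). intros z [y [t [Hyt ->]]]. apply NNPP; intro Hn.
    apply Rbar_not_le in Hn. apply Rmin_ge_inv in Hn as [Hz1 Hz2].
    pose proof (barJ_sub d B HB y t Hyt) as Ht01.
    pose proof (xi_ge_inv xi Hxi t sd _ Ht01 ltac:(lra) Ed Hz1) as Htd.
    destruct (H2 (y, t) Hyt) as [[x s] [Hxs Hc]].
    pose proof (barJ_sub d A HA x s Hxs) as Hs01.
    pose proof (cone_dist_t d Hm (x, s) (y, t) ltac:(simpl; lra) ltac:(simpl; lra)) as Ct. simpl in Ct.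
    assert (Hts : sc <= s) by (apply Rabs_le_inv2 in Ct; lra).
    assert (Hmin : sc <= Rmin s t) by (apply Rmin_glb; lra).
    assert (Hdxy : d x y < du).
    { unfold cone_dist in Hc; simpl in Hc. pose proof (Rabs_pos (s - t)).
      apply (dist_from_cone (d x y) (Rmin s t) sc delta du); auto; try lra. apply (d_nonneg d Hm). }
    specialize (Hu x y Hdxy). apply Rabs_def2 in Hu.
    assert (m + eps/4 <= m); [|lra].
    apply (le_sup _ _ (Rbar_min (xi s) (fn phi x)) _ SA). exists x, s; split; auto.
    apply Rmin_ge; [|lra]. apply (xi_ge_val xi Hxi s sc); auto; lra. }
  apply Rabs_def1; lra.
Qed.

Lemma xi_fin_lt xi : order_homeo xi -> forall s t v w, 0 <= s -> s < t -> t <= 1 ->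
  xi s = Fin v -> xi t = Fin w -> v < w.
Proof.
  intros H s t v w H1 H2 H3 E1 E2. pose proof (xi_strict xi H s t H1 H2 H3). rewrite E1, E2 in H0.
  simpl in H0. lra.
Qed.

Lemma Rmin_not_le a r v : ~ Rbar_le (Rbar_min a r) (Fin v) -> ~ Rbar_le a (Fin v) /\ v < r.
Proof.
  intros H. split.
  - intro H2. apply H. apply Rmin_lub. auto.
  - apply Rnot_le_lt. intro H2. apply H. apply Rmin_lub. auto.
Qed.

Lemma Dp_sym {X} (d : X -> X -> R) : is_metric d -> forall p q, Dp d p q = Dp d q p.
Proof. intros Hm p q. unfold Dp. rewrite (d_sym d Hm), Rabs_minus_sym. auto. Qed.
Lemma Dp_tri {X} (d : X -> X -> R) : is_metric d -> forall p q r, Dp d p r <= Dp d p q + Dp d q r.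
Proof.
  intros Hm p q r. unfold Dp. pose proof (d_tri d Hm (fst p) (fst q) (fst r)).
  pose proof (Rabs_triang (snd p - snd q) (snd q - snd r)).
  replace (snd p - snd q + (snd q - snd r)) with (snd p - snd r) in H0 by ring. lra.
Qed.

Lemma tests {X} (d : X -> X -> R) (Hm : is_metric d) xi (Hxi : order_homeo xi) eps (He : 0 < eps) :
  forall N : list (X * R), exists (phis : list (CX d)) delta, 0 < delta /\
   forall w tau, In (w, tau) N -> 0 <= tau <= 1 -> eps/4 < tau ->
     exists a1 a2, xi (tau - eps/4) = Fin a1 /\ xi (tau - eps/8) = Fin a2 /\
       In (cbump d Hm w a1 a2 (4 * (a2 - a1) / eps)) phis /\ delta <= (a2 - a1) / 4.
Proof.
  induction N as [|[w tau] N [phis [delta [Hd IH]]]].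
  - exists nil, 1. split; [lra|]. intros w tau [].
  - destruct (classic (0 <= tau <= 1 /\ eps/4 < tau)) as [[Ht1 Ht2]|Hno].
    + assert (T1 : 0 < tau - eps/4 < 1) by lra.
      assert (T2 : 0 < tau - eps/8 < 1) by lra.
      destruct (xi_fin xi Hxi (tau - eps/4) T1) as [a1 E1].
      destruct (xi_fin xi Hxi (tau - eps/8) T2) as [a2 E2].
      pose proof (xi_fin_lt xi Hxi (tau - eps/4) (tau - eps/8) _ _ ltac:(lra) ltac:(lra) ltac:(lra) E1 E2) as Ha.
      exists (cbump d Hm w a1 a2 (4 * (a2 - a1) / eps) :: phis), (Rmin delta ((a2 - a1)/4)).
      split; [apply Rmin_glb_lt; lra|].
      intros w' tau' [Eq|Hin] Ht1' Ht2'.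
      * inversion Eq; subst. exists a1, a2. repeat split; auto. left; auto. apply Rmin_r.
      * destruct (IH w' tau' Hin Ht1' Ht2') as [b1 [b2 [F1 [F2 [F3 F4]]]]].
        exists b1, b2. repeat split; auto. right; auto.
        eapply Rle_trans; [apply Rmin_l|auto].
    + exists phis, delta. split; auto. intros w' tau' [Eq|Hin] Ht1' Ht2'.
      * inversion Eq; subst. exfalso; apply Hno; auto.
      * apply IH; auto.
Qed.

Lemma hinv {X} (d : X -> X -> R) xi : compact_metric_space d -> order_homeo xi ->
  forall A eps, in_barJ d A -> 0 < eps ->
     exists (phis : list (CX d)) delta, 0 < delta /\
       forall B, in_barJ d B ->
         (forall phi, In phi phis -> Rabs (hX d xi B phi - hX d xi A phi) < delta) ->
         hausdorff_le d A B eps.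
Proof.
  intros HX Hxi A eps HA He. pose proof (proj1 HX) as Hm.
  set (rho := eps / 16).
  destruct (total_bounded (Dp d) Kp (Dp_sym d Hm) (Dp_tri d Hm)
              (prod_seq_compact d Hm (proj2 HX)) rho ltac:(unfold rho; lra)) as [N [HN1 HN2]].
  destruct (tests d Hm xi Hxi eps He N) as [phis [delta [Hd Htst]]].
  exists phis, delta. split; auto. intros B HB Hcl.
  pose proof (hX_spec d xi HX Hxi A (barJ_one d A HA)) as SA.
  pose proof (hX_spec d xi HX Hxi B (barJ_one d B HB)) as SB.
  assert (Net : forall y t, 0 <= t <= 1 -> eps < t -> exists w tau a1 a2,
     d w y < rho /\ Rabs (tau - t) < rho /\ 0 <= tau <= 1 /\ eps / 4 < tau /\
     xi (tau - eps/4) = Fin a1 /\ xi (tau - eps/8) = Fin a2 /\ a1 < a2 /\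
     Rabs (hX d xi B (cbump d Hm w a1 a2 (4 * (a2 - a1) / eps)) -
           hX d xi A (cbump d Hm w a1 a2 (4 * (a2 - a1) / eps))) < (a2 - a1) / 4).
  { intros y t Ht Hte. destruct (HN2 (y, t) Ht) as [[w tau] [Hin HD]].
    unfold Dp in HD; simpl in HD. pose proof (d_nonneg d Hm w y). pose proof (Rabs_pos (tau - t)).
    pose proof (HN1 _ Hin) as Kt. unfold Kp in Kt; simpl in Kt.
    assert (Htau : eps / 4 < tau) by (unfold rho in *; pose proof (Rabs_le_inv2 (tau - t) (Rabs (tau - t)) (Rle_refl _)); lra).
    destruct (Htst w tau Hin Kt Htau) as [a1 [a2 [E1 [E2 [Hin2 Hda]]]]].
    pose proof (xi_fin_lt xi Hxi (tau - eps/4) (tau - eps/8) _ _ ltac:(lra) ltac:(lra) ltac:(lra) E1 E2) as Ha.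
    exists w, tau, a1, a2. repeat split; auto; try lra.
    eapply Rlt_le_trans; [apply Hcl; auto| auto]. }
  assert (F1 : forall w a1 a2 y t tau, a1 < a2 -> 0 <= t <= 1 -> 0 <= tau - eps/8 -> tau - eps/8 <= t ->
      xi (tau - eps/8) = Fin a2 -> d w y < rho ->
      Rbar_le (Fin (a2 - (a2 - a1)/4)) (Rbar_min (xi t) (fn (cbump d Hm w a1 a2 (4 * (a2 - a1) / eps)) y))).
  { intros w a1 a2 y t tau Ha Ht Hs1 Hs2 E2 Hdy. apply Rmin_ge.
    - apply (Fin_le_Rbar _ _ a2); [|lra]. apply (xi_ge_val xi Hxi t (tau - eps/8)); auto; lra.
    - simpl. eapply Rle_trans; [|apply Rmax_r].
      assert (4 * (a2 - a1) / eps * d w y <= (a2 - a1) / 4); [|lra].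
      assert (4 * (a2 - a1) / eps * rho = (a2 - a1)/4) by (unfold rho; field; lra).
      assert (0 <= 4 * (a2 - a1) / eps) by (unfold Rdiv; apply Rmult_le_pos; [lra|left; apply Rinv_0_lt_compat; lra]).
      pose proof (d_nonneg d Hm w y). nra. }
  split.
  - intros [z s] Hzs. pose proof (barJ_sub d A HA z s Hzs) as Hs.
    destruct (Rle_dec s eps) as [Hse|Hse].
    { exists (z, 0). split; [apply (barJ_zero d B HB)|]. unfold cone_dist; simpl.
      rewrite (d_refl d Hm), Rmult_0_r, Rplus_0_l, Rminus_0_r, Rabs_pos_eq; lra. }
    destruct (Net z s Hs ltac:(lra)) as [w [tau [a1 [a2 [Hwz [Hts [Htau [Htau2 [E1 [E2 [Ha Hcl2]]]]]]]]]]].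
    pose proof (Rabs_le_inv2 _ _ (Rle_refl (Rabs (tau - s)))) as Hts'.
    set (phi := cbump d Hm w a1 a2 (4 * (a2 - a1) / eps)) in *.
    assert (HAv : a2 - (a2 - a1)/4 <= hX d xi A phi).
    { apply (le_sup _ _ (Rbar_min (xi s) (fn phi z)) _ (SA phi)).
      exists z, s; split; auto. apply (F1 w a1 a2 z s tau); auto; unfold rho in *; lra. }
    apply Rabs_def2 in Hcl2.
    destruct (sup_approx _ _ ((a1 + a2)/2) (SB phi) ltac:(lra)) as [z' [[y [t [Hyt ->]]] [_ Hn]]].
    apply Rmin_not_le in Hn as [Hn1 Hn2].
    pose proof (barJ_sub d B HB y t Hyt) as Ht.
    assert (Htg : tau - eps/4 < t).
    { apply Rnot_le_lt. intro Hle. apply Hn1. eapply Rbar_le_Fin.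
      apply (xi_le_val xi Hxi t (tau - eps/4) a1); auto; lra. lra. }
    assert (Hwy : d w y < eps / 8).
    { simpl in Hn2. unfold Rmax in Hn2. destruct Rle_dec; [|lra].
      assert (4 * (a2 - a1) / eps * d w y < (a2 - a1) / 2) by lra.
      assert (4 * (a2 - a1) / eps * d w y = (a2 - a1) / 2 * (d w y / (eps / 8))) by (field; lra).
      rewrite H0 in H. assert (d w y / (eps / 8) < 1).
      { apply Rmult_lt_reg_l with ((a2 - a1)/2); lra. }
      apply Rmult_lt_reg_r with (/ (eps/8)). apply Rinv_0_lt_compat; lra.
      rewrite Rinv_r by lra. exact H1. }
    exists (y, Rmin t s). split.
    + apply (barJ_sat d B HB y t); auto. pose proof (Rmin_l t s). unfold Rmin; destruct Rle_dec; lra.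
    + eapply Rle_trans. apply cone_dist_le; auto; simpl; auto. apply Rmin01; auto.
      simpl. pose proof (d_tri d Hm z w y). rewrite (d_sym d Hm z w) in H.
      assert (Rabs (s - Rmin t s) <= rho + eps / 4).
      { unfold Rmin; destruct Rle_dec; rewrite Rabs_pos_eq; unfold rho in *; lra. }
      unfold rho in *; lra.
  - intros [y t] Hyt. pose proof (barJ_sub d B HB y t Hyt) as Ht.
    destruct (Rle_dec t eps) as [Hte|Hte].
    { exists (y, 0). split; [apply (barJ_zero d A HA)|]. unfold cone_dist; simpl.
      rewrite (d_refl d Hm), Rmult_0_r, Rplus_0_l, Rabs_minus_sym, Rminus_0_r, Rabs_pos_eq; lra. }
    apply NNPP; intro Hno.
    destruct (Net y t Ht ltac:(lra)) as [w [tau [a1 [a2 [Hwy [Hts [Htau [Htau2 [E1 [E2 [Ha Hcl2]]]]]]]]]]].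
    pose proof (Rabs_le_inv2 _ _ (Rle_refl (Rabs (tau - t)))) as Hts'.
    set (phi := cbump d Hm w a1 a2 (4 * (a2 - a1) / eps)) in *.
    assert (HBv : a2 - (a2 - a1)/4 <= hX d xi B phi).
    { apply (le_sup _ _ (Rbar_min (xi t) (fn phi y)) _ (SB phi)).
      exists y, t; split; auto. apply (F1 w a1 a2 y t tau); auto; unfold rho in *; lra. }
    assert (HAv : hX d xi A phi <= a1).
    { apply (sup_le _ _ _ (SA phi)). intros z' [z [s [Hzs ->]]]. apply Rmin_lub.
      pose proof (barJ_sub d A HA z s Hzs) as Hs.
      destruct (Rle_dec s (tau - eps/4)) as [Hs1|Hs1].
      - left. apply (xi_le_val xi Hxi s (tau - eps/4)); auto; lra.
      - right. destruct (Rle_dec (eps/4) (d w z)) as [Hd4|Hd4].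
        + simpl. apply Rmax_lub; [lra|].
          assert (4 * (a2 - a1) / eps * (eps / 4) = a2 - a1) by (field; lra).
          assert (0 <= 4 * (a2 - a1) / eps) by (unfold Rdiv; apply Rmult_le_pos; [lra|left; apply Rinv_0_lt_compat; lra]).
          nra.
        + exfalso. apply Hno. exists (z, Rmin s t). split.
          * apply (barJ_sat d A HA z s); auto. pose proof (Rmin_l s t). unfold Rmin; destruct Rle_dec; lra.
          * eapply Rle_trans. apply cone_dist_le; auto; simpl; auto. apply Rmin01; auto.
            simpl. pose proof (d_tri d Hm z w y). rewrite (d_sym d Hm z w) in H.
            assert (Rabs (Rmin s t - t) <= rho + eps / 4).
            { unfold Rmin; destruct Rle_dec; [rewrite Rabs_minus_sym|]; rewrite Rabs_pos_eq; unfold rho in *; lra. }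
            unfold rho in *; lra. }
    apply Rabs_def2 in Hcl2. lra.
Qed.

Lemma mu_mono {X} {d : X -> X -> R} (mu : CX d -> R) : is_maxmin mu ->
  forall f g : CX d, (forall x, fn f x <= fn g x) -> mu f <= mu g.
Proof.
  intros (_ & H & _) f g Hfg. rewrite (H f g g).
  apply Rmax_l. intros x. rewrite Rmax_right; auto.
Qed.
Lemma mu_cst {X} {d : X -> X -> R} (mu : CX d -> R) : is_maxmin mu -> forall c, mu (ccst d c) = c.
Proof. intros (H & _) c. apply H. reflexivity. Qed.
Lemma mu_max {X} {d : X -> X -> R} (mu : CX d -> R) : is_maxmin mu -> forall f g, mu (cmax f g) = Rmax (mu f) (mu g).
Proof. intros (_ & H & _) f g. apply H. reflexivity. Qed.
Lemma mu_minc {X} {d : X -> X -> R} (mu : CX d -> R) : is_maxmin mu -> forall c f, mu (cminc c f) = Rmin c (mu f).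
Proof. intros (_ & _ & H) c f. apply H. reflexivity. Qed.

Definition Nnull {X} {d : X -> X -> R} (mu : CX d -> R) (x : X) (c : R) : Prop :=
  exists r, 0 < r /\ exists f : CX d, (forall y, d x y < r -> c <= fn f y) /\ mu f < c.

Lemma N_up {X} (d : X -> X -> R) (mu : CX d -> R) : compact_metric_space d -> is_maxmin mu ->
  forall x c c2, Nnull mu x c -> c <= c2 -> Nnull mu x c2.
Proof.
  intros HX Hmu x c c2 [r [Hr [f [Hf Hmf]]]] Hc. pose proof (proj1 HX) as Hm.
  destruct (cont_bounded_below d HX (fn f) (proj2_sig f)) as [L HL].
  set (L' := Rmin L c2).
  assert (HL' : L' <= L /\ L' <= c2) by (split; [apply Rmin_l|apply Rmin_r]).
  set (K := (c2 + 1 - L') / r).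
  assert (HK : 0 < K) by (unfold K; apply Rdiv_lt_0_compat; lra).
  assert (HKr : K * r = c2 + 1 - L') by (unfold K; field; lra).
  set (b := cbump d Hm x L' (c2 + 1) K).
  assert (Hb : mu b < c).
  { assert (Rmin c (mu b) <= mu f).
    { rewrite <- (mu_minc mu Hmu). apply (mu_mono mu Hmu). intros y. simpl.
      destruct (Rlt_dec (d x y) r) as [Hy|Hy].
      - specialize (Hf y Hy). eapply Rle_trans; [apply Rmin_l|auto].
      - eapply Rle_trans; [apply Rmin_r|]. apply Rmax_lub. specialize (HL y); lra.
        assert (K * r <= K * d x y) by (apply Rmult_le_compat_l; lra). specialize (HL y). lra. }
    unfold Rmin in H; destruct Rle_dec; lra. }
  exists (/ K). split; [apply Rinv_0_lt_compat; auto|]. exists b. split; [|lra].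
  intros y Hy. simpl. eapply Rle_trans; [|apply Rmax_r].
  assert (K * d x y < 1).
  { apply Rmult_lt_reg_l with (/ K). apply Rinv_0_lt_compat; auto.
    rewrite <- Rmult_assoc, Rinv_l, Rmult_1_l, Rmult_1_r by lra. auto. }
  lra.
Qed.

Lemma N_ball {X} (d : X -> X -> R) (mu : CX d -> R) : is_metric d ->
  forall x c, Nnull mu x c -> exists r, 0 < r /\ forall y, d x y < r -> Nnull mu y c.
Proof.
  intros Hm x c [r [Hr [f [Hf Hmf]]]]. exists (r/2). split; [lra|]. intros y Hy.
  exists (r/2). split; [lra|]. exists f. split; auto. intros z Hz. apply Hf.
  pose proof (d_tri d Hm x y z). lra.
Qed.

Lemma cover {X} (d : X -> X -> R) (mu : CX d -> R) : compact_metric_space d -> is_maxmin mu ->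
  forall (phi : CX d) c' c, c' < c -> c < mu phi -> exists x, c' <= fn phi x /\ ~ Nnull mu x c.
Proof.
  intros HX Hmu phi c' c Hc Hcm. pose proof (proj1 HX) as Hm. apply NNPP; intro Hn.
  assert (H : forall x, c' <= fn phi x -> Nnull mu x c).
  { intros x Hx. apply NNPP; intro H2. apply Hn. exists x; auto. }
  set (P := fun y s => (exists f : CX d, (forall z, d y z < s -> c <= fn f z) /\ mu f < c) \/
                       (forall z, d y z < s -> fn phi z <= c')).
  assert (Pshrink : forall y s s', P y s -> s' <= s -> P y s').
  { intros y s s' [[f [H1 H2]]|H1] Hs; [left; exists f; split; auto|right];
    intros z Hz; [apply H1|apply H1]; lra. }
  assert (Ploc : forall x, exists r, 0 < r /\ P x r).
  { intros x. destruct (Rle_dec c' (fn phi x)) as [Hx|Hx].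
    - destruct (H x Hx) as [r [Hr [f Hf]]]. exists r. split; auto. left. exists f; auto.
    - apply Rnot_le_lt in Hx.
      assert (Hpos : 0 < c' - fn phi x) by lra.
      destruct (proj2_sig phi x (c' - fn phi x) Hpos) as [r [Hr Hr2]].
      exists r. split; auto. right. intros z Hz. specialize (Hr2 z Hz). apply Rabs_def2 in Hr2.
      unfold fn in *. lra. }
  assert (Pmove : forall x y r, P x r -> d x y < r / 2 -> P y (r / 2)).
  { intros x y r [[f [H1 H2]]|H1] Hxy; [left; exists f; split; auto|right];
    intros z Hz; apply H1; pose proof (d_tri d Hm x y z); lra. }
  assert (Unif : exists s, 0 < s /\ forall y, P y s).
  { apply NNPP; intro Hno.
    assert (Hseq : forall n : nat, exists y, ~ P y (/ (INR n + 1))).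
    { intros n. apply NNPP; intro H2. apply Hno. exists (/ (INR n + 1)). split; [apply inv_pos|].
      intros y. apply NNPP; intro H3. apply H2. exists y; auto. }
    destruct (choice _ Hseq) as [u Hu].
    destruct (seqX d HX u) as [g [y [Hg Hy]]].
    destruct (Ploc y) as [r [Hr Pr]].
    destruct (Hy (r/2) ltac:(lra)) as [N1 HN1].
    destruct (small_inv (r/2) ltac:(lra)) as [N2 HN2].
    set (n := max N1 N2). pose proof (strict_ge g Hg n).
    specialize (HN1 n ltac:(lia)). specialize (HN2 (g n) ltac:(lia)).
    rewrite (d_sym d Hm) in HN1.
    apply (Hu (g n)). apply (Pshrink _ (r/2)); [|lra]. apply (Pmove y); auto. }
  destruct Unif as [s [Hs Ps]].
  destruct (total_bounded d (fun _ => True) (d_sym d Hm) (d_tri d Hm) (proj2 HX) s Hs) as [l [_ Hl]].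
  assert (Comb : forall l' : list X, exists G : CX d, mu G < c /\
             forall w, In w l' -> forall z, d w z < s -> Rmin c (fn phi z) <= fn G z).
  { induction l' as [|w l' [G [HG1 HG2]]].
    - exists (ccst d (c - 1)). rewrite (mu_cst mu Hmu). split; [lra|]. intros w [].
    - destruct (Ps w) as [[f [Hf1 Hf2]]|Hph].
      + exists (cmax f G). rewrite (mu_max mu Hmu). split; [apply Rmax_lub_lt; auto|].
        intros w' [<-|Hin] z Hz; simpl.
        * apply Rle_trans with c; [apply Rmin_l|]. apply Rle_trans with (fn f z); [apply Hf1; auto|]. apply Rmax_l.
        * apply Rle_trans with (fn G z); [apply HG2 with w'; auto|]. apply Rmax_r.
      + exists (cmax (cminc c' phi) G). rewrite (mu_max mu Hmu), (mu_minc mu Hmu).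
        split. apply Rmax_lub_lt; auto. eapply Rle_lt_trans; [apply Rmin_l|auto].
        intros w' [<-|Hin] z Hz; simpl.
        * eapply Rle_trans; [|apply Rmax_l]. specialize (Hph z Hz).
          rewrite (Rmin_right c') by auto. apply Rmin_r.
        * apply Rle_trans with (fn G z); [apply HG2 with w'; auto|]. apply Rmax_r. }
  destruct (Comb l) as [G [HG1 HG2]].
  assert (mu (cminc c phi) <= mu G).
  { apply (mu_mono mu Hmu). intros z. destruct (Hl z I) as [w [Hw Hwz]]. simpl. apply (HG2 w Hw z Hwz). }
  rewrite (mu_minc mu Hmu) in H0. rewrite Rmin_left in H0 by lra. lra.
Qed.

Definition Amu {X} {d : X -> X -> R} (mu : CX d -> R) (xi : R -> Rbar) (p : X * R) : Prop :=
  0 <= snd p <= 1 /\ forall c, Nnull mu (fst p) c -> Rbar_le (xi (snd p)) (Fin c).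

Lemma Rbar_gap a m b : ~ Rbar_le a (Fin m) -> m < b -> exists c, m < c < b /\ ~ Rbar_le a (Fin c).
Proof.
  destruct a as [v| |]; simpl; intros H Hb.
  - exists ((m + Rmin v b) / 2). unfold Rmin; destruct Rle_dec; split; lra.
  - exists ((m + b)/2). split; [lra|tauto].
  - tauto.
Qed.

Lemma Amu_in {X} (d : X -> X -> R) xi (mu : CX d -> R) : compact_metric_space d -> order_homeo xi ->
  is_maxmin mu -> forall x c, ~ Nnull mu x c -> exists t, Amu mu xi (x, t) /\ xi t = Fin c.
Proof.
  intros HX Hxi Hmu x c Hn. destruct (xi_inv xi Hxi c) as [t [Ht E]]. exists t. split; auto.
  split; simpl; [lra|]. intros c2 Hc2. rewrite E. simpl. apply Rnot_lt_le. intro Hlt.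
  apply Hn. apply (N_up d mu HX Hmu x c2 c); auto; lra.
Qed.

Lemma Amu_big {X} (d : X -> X -> R) xi (mu : CX d -> R) : compact_metric_space d -> order_homeo xi ->
  is_maxmin mu -> forall (phi : CX d) w, w < mu phi ->
  exists x t, Amu mu xi (x, t) /\ ~ Rbar_le (Rbar_min (xi t) (fn phi x)) (Fin w).
Proof.
  intros HX Hxi Hmu phi w Hw.
  destruct (cover d mu HX Hmu phi (w + (mu phi - w)/3) (w + 2 * (mu phi - w) / 3) ltac:(lra) ltac:(lra))
    as [x [Hx Hn]].
  destruct (Amu_in d xi mu HX Hxi Hmu x _ Hn) as [t [Ht E]].
  exists x, t. split; auto. rewrite E. simpl. unfold Rmin; destruct Rle_dec; lra.
Qed.

Lemma Amu_sup {X} (d : X -> X -> R) xi (mu : CX d -> R) : compact_metric_space d -> order_homeo xi ->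
  is_maxmin mu -> forall phi : CX d, is_sup_Rbar (hset xi (Amu mu xi) phi) (mu phi).
Proof.
  intros HX Hxi Hmu phi. pose proof (proj1 HX) as Hm. split.
  - intros z [x [t [[Ht HA] ->]]]. apply NNPP; intro Hn.
    apply Rmin_not_le in Hn as [Hn1 Hn2].
    destruct (Rbar_gap _ _ _ Hn1 Hn2) as [c [Hc Hc2]].
    assert (Hpos : 0 < fn phi x - c) by lra.
    destruct (proj2_sig phi x (fn phi x - c) Hpos) as [r [Hr Hr2]].
    apply Hc2. apply HA. simpl. exists r. split; auto. exists phi. split; [|lra].
    intros y Hy. specialize (Hr2 y Hy). apply Rabs_def2 in Hr2. unfold fn in *. lra.
  - intros u Hu. destruct u as [v| |]; simpl.
    + apply Rnot_lt_le; intro Hlt.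
      destruct (Amu_big d xi mu HX Hxi Hmu phi v Hlt) as [x [t [HA Hn]]].
      apply Hn. apply Hu. exists x, t; split; auto.
    + auto.
    + destruct (Amu_big d xi mu HX Hxi Hmu phi (mu phi - 1) ltac:(lra)) as [x [t [HA Hn]]].
      apply Hn. eapply Rbar_le_trans. apply Hu. exists x, t; split; auto. simpl; auto.
Qed.

Lemma Amu_barJ {X} (d : X -> X -> R) xi (mu : CX d -> R) : compact_metric_space d -> order_homeo xi ->
  is_maxmin mu -> in_barJ d (Amu mu xi).
Proof.
  intros HX Hxi Hmu. pose proof (proj1 HX) as Hm.
  assert (One : exists x, Amu mu xi (x, 1)).
  { assert (Hs : forall n : nat, exists x, ~ Nnull mu x (INR n + 1)).
    { intros n. destruct (cover d mu HX Hmu (ccst d (INR n + 2)) (INR n) (INR n + 1) ltac:(lra)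
         ltac:(rewrite (mu_cst mu Hmu); lra)) as [x [_ Hx]]. exists x; auto. }
    destruct (choice _ Hs) as [u Hu].
    destruct (seqX d HX u) as [g [x [Hg Hx]]].
    exists x. split; simpl; [lra|]. intros c Hc. exfalso.
    destruct (N_ball d mu Hm x c Hc) as [r [Hr Hr2]].
    destruct (Hx r Hr) as [N1 HN1].
    destruct (INR_unbounded c) as [k Hk].
    set (n := max N1 k). pose proof (strict_ge g Hg n).
    specialize (HN1 n ltac:(lia)). rewrite (d_sym d Hm) in HN1.
    assert (INR k <= INR (g n)) by (apply le_INR; lia).
    apply (Hu (g n)). apply (N_up d mu HX Hmu _ c); auto. lra. }
  split; [|split; [|split; [|split]]].
  - split.
    + intros x t [H _]. exact H.
    + intros x y [_ H]. split; simpl; [lra|]. intros c _. rewrite (xi0 xi Hxi). simpl; auto.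
  - destruct One as [x Hx]. exists (x, 1); auto.
  - intros u Hu. destruct (prod_compact d (proj2 HX) u (fun n => proj1 (Hu n))) as [g [x [t [Hg [Ht Hc]]]]].
    exists g, (x, t). split; auto. split.
    + split; simpl; auto. intros c Hnc. apply NNPP; intro Hn.
      destruct (xi_inv xi Hxi c) as [sg [Hsg E]].
      pose proof (xi_gt_pos xi Hxi t sg c Ht ltac:(lra) E Hn) as Hlt.
      destruct (N_ball d mu Hm x c Hnc) as [r [Hr Hr2]].
      destruct (Hc (Rmin r (t - sg)) ltac:(apply Rmin_glb_lt; lra)) as [N HN].
      destruct (HN N (le_n _)) as [H1 H2].
      pose proof (Rmin_l r (t - sg)). pose proof (Rmin_r r (t - sg)).
      destruct (Hu (g N)) as [Hu1 Hu2].
      specialize (Hu2 c ltac:(apply Hr2; rewrite (d_sym d Hm); lra)).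
      apply Rabs_def2 in H2.
      apply (xi_strict xi Hxi sg (snd (u (g N))) ltac:(lra) ltac:(lra) ltac:(lra)). rewrite E. exact Hu2.
    + intros eps He. destruct (Hc (eps/2) ltac:(lra)) as [N HN]. exists N. intros n Hn.
      destruct (HN n Hn) as [H1 H2].
      eapply Rle_lt_trans. apply (cone_dist_le d Hm). apply (Hu (g n)). simpl; auto.
      simpl. lra.
  - intros x t t' [H1 H2] H3. split; simpl in *; [lra|]. intros c Hc.
    eapply Rbar_le_trans; [|apply (H2 c Hc)]. apply xi_mono; auto; lra.
  - exact One.
Qed.

Lemma surj {X} (d : X -> X -> R) xi : compact_metric_space d -> order_homeo xi ->
  forall mu : CX d -> R, is_maxmin mu ->
     exists A, in_barJ d A /\ forall phi, hX d xi A phi = mu phi.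
Proof.
  intros HX Hxi mu Hmu. exists (Amu mu xi). pose proof (Amu_barJ d xi mu HX Hxi Hmu) as HA.
  split; auto. intros phi. apply (sup_unique (hset xi (Amu mu xi) phi)).
  apply (hX_spec d xi HX Hxi _ (barJ_one d _ HA)). apply Amu_sup; auto.
Qed.

Theorem mainTheorem11 (X : Type) (d : X -> X -> R) (xi : R -> Rbar)
  (HX : compact_metric_space d) (Hdiam : diam_le_1 d) (Hxi : order_homeo xi) :
  (* h_X(A) is well defined (the supremum is a real number) and lies in J(X) *)
  (forall A, in_barJ d A ->
     (forall phi : CX d, is_sup_Rbar (hset xi A phi) (hX d xi A phi)) /\
     is_maxmin (hX d xi A)) /\
  (* h_X is injective *)
  (forall A B, in_barJ d A -> in_barJ d B ->
     (forall phi : CX d, hX d xi A phi = hX d xi B phi) ->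
     forall p, A p <-> B p) /\
  (* h_X is surjective onto J(X) *)
  (forall mu : CX d -> R, is_maxmin mu ->
     exists A, in_barJ d A /\ forall phi, hX d xi A phi = mu phi) /\
  (* h_X is continuous (Hausdorff metric -> pointwise convergence) *)
  (forall A (phi : CX d) eps, in_barJ d A -> 0 < eps ->
     exists delta, 0 < delta /\
       forall B, in_barJ d B -> hausdorff_le d A B delta ->
         Rabs (hX d xi B phi - hX d xi A phi) < eps) /\
  (* h_X^{-1} is continuous (pointwise convergence -> Hausdorff metric) *)
  (forall A eps, in_barJ d A -> 0 < eps ->
     exists (phis : list (CX d)) delta, 0 < delta /\
       forall B, in_barJ d B ->
         (forall phi, In phi phis -> Rabs (hX d xi B phi - hX d xi A phi) < delta) ->
         hausdorff_le d A B eps).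
Proof.
  split; [|split; [|split; [|split]]].
  - intros A HA. split.
    + apply (hX_spec d xi HX Hxi A (barJ_one d A HA)).
    + apply (hX_maxmin d xi HX Hxi A (barJ_one d A HA)).
  - intros A B HA HB Heq p. split.
    + apply (inj_one d xi HX Hxi A B HA HB Heq).
    + apply (inj_one d xi HX Hxi B A HB HA). intros phi; symmetry; auto.
  - apply surj; auto.
  - apply hcont; auto.
  - apply hinv; auto.
Qed.
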